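(* Let $I_n=[0,1]^n$ and let $C(I_n)$ denote the space of continuous real-valued functions on $I_n$. Interpretable Continuous Control Trees (ICCTs), as defined in the context, are dense in $C(I_n)$ with respect to the supremum norm. That is, for every $f\in C(I_n)$ and every $\epsilon>0$ there exists an ICCT $I:\mathbb{R}^n\to\mathbb{R}$ such that $|I(x)-f(x)|<\epsilon$ for all $x\in I_n$.
   Context: An Interpretable Continuous Control Tree (ICCT) with input $x=(x^1,\dots,x^n)\in\mathbb{R}^n$ and scalar output is a binary tree of arbitrary (finite) depth in which every internal (decision) node $i$ carries a coordinate index $k_i\in\{1,\dots,n\}$, a nonzero weight $w_i\in\mathbb{R}$, a threshold $b_i\in\mathbb{R}$ and a steepness $\alpha\neq 0$, and evaluates the crisp (Boolean) test $\mathbbm{1}(\alpha(w_i x^{k_i}-b_i)>0)$; the input is routed to the left child if the test is true and to the right child otherwise, starting from the root, until a leaf is reached. Each leaf $d$ carries an affine controller $l_d(x)=(\vec u_d\circ\vec\beta_d)^T(\vec u_d\circ x)+\vec u_d^T\vec\phi_d$, where $\vec\beta_d,\vec\phi_d\in\mathbb{R}^n$ and $\vec u_d\in\{0,1\}^n$ is a selection vector of active features (the case $\vec u_d=0$ with a constant output, i.e. a static leaf value, is allowed). The output $I(x)$ is the value $l_d(x)$ of the leaf $d$ reached by $x$. Equivalently, $I(x)=\sum_{d} l_d(x)\prod_{\text{nodes on path to }d}(\text{indicator or its complement})$, a sum over leaves of the leaf value times the product of the hard decision outcomes along the path. *)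

(* Defs.v *)
From HB Require Import structures.
From mathcomp Require Import all_boot all_order all_algebra.
From mathcomp Require Import all_classical all_reals all_analysis.
Set Implicit Arguments. Unset Strict Implicit. Unset Printing Implicit Defensive.
Import Order.TTheory GRing.Theory Num.Theory.
Local Open Scope ring_scope.

Inductive icct (R : realType) (n : nat) : Type :=
  (* affine leaf controller: beta, phi in R^n, selection vector u in {0,1}^n *)
  | ILeaf of 'rV[R]_n & 'rV[R]_n & ('I_n -> bool)
  (* static leaf (u_d = 0 with a constant output value) *)
  | IConst of R
  (* decision node: feature k, weight w, threshold b, steepness alpha,
     left child (test true), right child (test false) *)
  | INode of 'I_n & R & R & R & icct R n & icct R n.

Arguments ILeaf {R n}. Arguments IConst {R n}. Arguments INode {R n}.

Fixpoint icct_wf (R : realType) (n : nat) (t : icct R n) : Prop :=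
  match t with
  | ILeaf _ _ _ => True
  | IConst _ => True
  | INode _ w _ alpha l r => w != 0 /\ alpha != 0 /\ icct_wf l /\ icct_wf r
  end.

Definition leaf_val (R : realType) (n : nat) (beta phi : 'rV[R]_n)
    (u : 'I_n -> bool) (x : 'rV[R]_n) : R :=
  \sum_(i < n) ((u i)%:R * beta ord0 i) * ((u i)%:R * x ord0 i)
  + \sum_(i < n) (u i)%:R * phi ord0 i.

(* crisp evaluation: route left iff alpha (w x^k - b) > 0 *)
Fixpoint icct_eval (R : realType) (n : nat) (t : icct R n) (x : 'rV[R]_n) : R :=
  match t with
  | ILeaf beta phi u => leaf_val beta phi u x
  | IConst c => c
  | INode k w b alpha l r =>
      if 0 < alpha * (w * x ord0 k - b) then icct_eval l x else icct_eval r x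
  end.

Definition unit_cube (R : realType) (n : nat) : set 'rV[R]_n :=
  [set x | forall i : 'I_n, 0 <= x ord0 i <= 1].
Arguments unit_cube R n : clear implicits.

(* Main.v *)
Require Import Defs.
From HB Require Import structures.
From mathcomp Require Import all_boot all_order all_algebra.
From mathcomp Require Import all_classical all_reals all_analysis.
From mathcomp Require Import lra.
Import Order.TTheory GRing.Theory Num.Theory.
Import numFieldNormedType.Exports.
Local Open Scope ring_scope.
Local Open Scope classical_set_scope.

Section Tree.
Variables (R : realType) (n N : nat) (f : 'rV[R]_n -> R).
Hypothesis N0 : (0 < N)%N.

Definition setv (p : 'rV[R]_n) (k : 'I_n) (v : R) : 'rV[R]_n :=
  \row_i (if i == k then v else p ord0 i).

Fixpoint chain (k : 'I_n) (m : nat) (cont : R -> icct R n) : icct R n :=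
  match m with
  | 0%N => cont 0
  | m'.+1 => INode k 1 (m'.+1%:R / N%:R) 1 (cont (m'.+1%:R / N%:R)) (chain k m' cont)
  end.

Lemma chain_wf k m cont : (forall v, icct_wf (cont v)) -> icct_wf (chain k m cont).
Proof.
move=> H; elim: m => [|m IH] //=; do !split => //; exact: oner_neq0.
Qed.

Lemma Npos : 0 < N%:R :> R. Proof. by rewrite ltr0n. Qed.

Lemma chain_eval k m cont (x : 'rV[R]_n) :
  0 <= x ord0 k -> x ord0 k <= m.+1%:R / N%:R ->
  exists v, [/\ 0 <= v, v <= x ord0 k, x ord0 k - v <= N%:R^-1 &
    icct_eval (chain k m cont) x = icct_eval (cont v) x].
Proof.
move=> x0; elim: m => [|m IH] /= xm.
  exists 0; split => //; first by rewrite subr0; rewrite div1r in xm.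
rewrite !mul1r; case: ifP => [h|/negbT h].
  exists (m.+1%:R / N%:R); split => //.
  - by move: h; rewrite subr_gt0 => /ltW.
  - move: xm; rewrite -[m.+2]addn1 natrD mulrDl div1r.
    set a := _ / _; set b := N%:R^-1; lra.
apply: IH; move: h; rewrite subr_gt0 -leNgt; done.
Qed.

Fixpoint build (ks : seq 'I_n) (p : 'rV[R]_n) : icct R n :=
  match ks with
  | [::] => IConst (f p)
  | k :: ks' => chain k N (fun v => build ks' (setv p k v))
  end.

Lemma build_wf ks p : icct_wf (build ks p).
Proof. elim: ks p => [|k ks IH] p //=; exact: chain_wf. Qed.

Lemma build_eval ks p x : unit_cube R n x ->
  exists q, icct_eval (build ks p) x = f q /\
   (forall i, i \in ks -> [/\ 0 <= q ord0 i, q ord0 i <= x ord0 i &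
                           x ord0 i - q ord0 i <= N%:R^-1]) /\
   (forall i, i \notin ks -> q ord0 i = p ord0 i).
Proof.
move=> xc; elim: ks p => [|k ks IH] p /=.
  by exists p; split => //; split.
have /andP[xk0 xk1] := xc k.
have [v [v0 vx vd ->]] : exists v, [/\ 0 <= v, v <= x ord0 k, x ord0 k - v <= N%:R^-1 &
    icct_eval (chain k N (fun v => build ks (setv p k v))) x =
    icct_eval (build ks (setv p k v)) x].
  apply: chain_eval => //; apply: (le_trans xk1).
  by rewrite ler_pdivlMr ?Npos // mul1r ler_nat.
have [q [-> [Hin Hout]]] := IH (setv p k v).
exists q; split => //; split.
- move=> i; rewrite in_cons; case/orP => [/eqP ->|ik]; last exact: Hin.
  case: (boolP (k \in ks)) => [/Hin //|/Hout ->].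
  by rewrite /setv mxE eqxx.
- move=> i; rewrite in_cons negb_or => /andP[ik iks].
  by rewrite Hout // /setv mxE (negbTE ik).
Qed.

End Tree.
Lemma ballE (R : realType) n (x y : 'rV[R]_n) r :
  ball x r y <-> 0 < r /\ forall i, `|x ord0 i - y ord0 i| < r.
Proof.
rewrite /ball /= /mx_ball; split=> -[r0 H]; split => //.
  by move=> i; have := H ord0 i; rewrite /ball /=.
by move=> i j; rewrite [i]ord1 /ball /=; exact: H.
Qed.

Lemma unif (R: realType) n (K : set 'rV[R]_n) (f : 'rV[R]_n -> R) (Kc: compact K)
  (hf : {within K, continuous f}) eps (heps : 0 < eps) :
 exists2 d, 0 < d & forall x y, K x -> K y ->
   (forall i, `|x ord0 i - y ord0 i| < d) -> `|f x - f y| < eps.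
Proof.
have nc := (compact_near_coveringP K).1 Kc.
pose P := fun (d:R) (x : 'rV[R]_n) => K x -> forall y, K y ->
   (forall i, `|x ord0 i - y ord0 i| < d) -> `|f x - f y| < eps.
have H : \forall d \near 0^'+, K `<=` P d.
  apply: nc => x Kx.
  have cx := (subspace_continuousP K f).1 hf x Kx.
  have e2 : 0 < eps / 2 by lra.
  have hh : nbhs x (fun t => K t -> `|f x - f t| < eps/2).
    have := (cvgrPdist_lt _ _).1 cx _ e2; apply; exact: within_filter.
  move: hh => /nbhs_ballP [r r0 Br].
  rewrite /= in r0; have r2 : 0 < r / 2 by lra.
  near=> x' d => Kx' y Ky hy.
  have bx : ball x (r/2) x' by near: x'; exact: nbhsx_ballx.
  have dr : d < r/2 by near: d; exact: nbhs_right_lt.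
  rewrite /= in Kx' hy *.
  move: bx => /ballE [_ bx].
  have h1 : `|f x - f x'| < eps / 2.
    apply: (Br x') => //; apply/ballE; split => // i.
    by apply: lt_trans (bx i) _; lra.
  have h2 : `|f x - f y| < eps / 2.
    apply: (Br y) => //; apply/ballE; split => // i.
    have := bx i; have := hy i.
    have := ler_normD (x ord0 i - x' ord0 i) (x' ord0 i - y ord0 i).
    rewrite addrA subrK.
    set a := `|_|; set b := `|_|; set c := `|_|; lra.
  have := ler_normD (f x' - f x) (f x - f y).
  rewrite addrA subrK; rewrite distrC in h1.
  lra.
near (0:R)^'+ => d.
exists d; first by near: d; exact: nbhs_right_gt.
move=> x y Kx Ky hxy.
have : K `<=` P d by near: d; exact: H.
by move/(_ x Kx Kx y Ky hxy).
Unshelve. all: by end_near.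
Qed.

Theorem theorem1 (R : realType) (n : nat) (f : 'rV[R]_n -> R)
  (hf : {within unit_cube R n, continuous f}) (eps : R) (heps : 0 < eps) :
  exists t : icct R n, icct_wf t /\
    forall x, unit_cube R n x -> `|icct_eval t x - f x| < eps.
Proof.
have Kc : compact (unit_cube R n).
  have := @rV_compact _ n (fun _ : 'I_n => `[0:R, 1]%classic) (fun _ => @segment_compact R 0 1).
  congr compact; apply/funext => x; apply/propext; split => h i; move: (h i);
    by rewrite /= in_itv.
have [d d0 Hd] := @unif R n (unit_cube R n) f Kc hf eps heps.
pose N := (Num.trunc (d^-1)).+1.
have N0 : (0 < N)%N by [].
have Nd : N%:R^-1 < d.
  rewrite invf_plt ?posrE ?ltr0n //; exact: truncnS_gt.
exists (@build R n N f (enum 'I_n) 0); split; first exact: build_wf.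
move=> x xc.
have [q [-> [Hin _]]] := @build_eval R n N f N0 (enum 'I_n) 0 x xc.
have qc : unit_cube R n q.
  move=> i; have [q0 qx _] := Hin i (mem_enum _ i).
  have /andP[_ x1] := xc i.
  by rewrite q0 /= (le_trans qx x1).
apply: Hd => // i.
have [q0 qx qd] := Hin i (mem_enum _ i).
rewrite distrC ger0_norm ?subr_ge0 //.
exact: le_lt_trans qd Nd.
Qed.
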